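(* Let $R$ be a commutative ring such that every semi-compact $R$-module is pure-injective. Then every prime ideal of $R$ is maximal.
   Context: An $R$-module $M$ is semi-compact if every finitely solvable system of congruences $x\equiv x_\alpha \pmod{M[I_\alpha]}$ ($\alpha\in\Lambda$, $x_\alpha\in M$, $I_\alpha$ an ideal, $M[I_\alpha]=\{m\in M: I_\alpha m=0\}$) has a simultaneous solution in $M$. A module is pure-injective if it is injective relative to all pure exact sequences (those remaining exact under tensoring with every module). *)

(* Defs.v *)
From HB Require Import structures.
From mathcomp Require Import all_boot all_order all_algebra.
Set Implicit Arguments. Unset Strict Implicit. Unset Printing Implicit Defensive.
Import GRing.Theory.
Local Open Scope ring_scope.

Section ModuleDefs.
Variable R : comPzRingType.

Definition is_ideal (I : R -> Prop) : Prop :=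
  I 0 /\ (forall x y, I x -> I y -> I (x + y)) /\ (forall r x, I x -> I (r * x)).

Definition prime_ideal (I : R -> Prop) : Prop :=
  is_ideal I /\ ~ I 1 /\ (forall x y, I (x * y) -> I x \/ I y).

Definition maximal_ideal (I : R -> Prop) : Prop :=
  is_ideal I /\ ~ I 1 /\
  (forall J : R -> Prop, is_ideal J -> (forall x, I x -> J x) ->
     (forall x, J x) \/ (forall x, J x -> I x)).

Definition annih_sub (M : lmodType R) (I : R -> Prop) : M -> Prop :=
  fun m => forall r, I r -> r *: m = 0.

(* Semi-compact module: every finitely solvable system of congruences
   x = x_a (mod M[I_a]) (a in Lambda, I_a ideals) has a global solution. *)
Definition semi_compact (M : lmodType R) : Prop :=
  forall (Lambda : Type) (xs : Lambda -> M) (I : Lambda -> R -> Prop),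
    (forall a, is_ideal (I a)) ->
    (forall (n : nat) (s : 'I_n -> Lambda), exists x : M,
        forall i, annih_sub (I (s i)) (x - xs (s i))) ->
    exists x : M, forall a, annih_sub (I a) (x - xs a).

Definition bilinear_map (X M N : lmodType R) (b : X -> M -> N) : Prop :=
  (forall (r : R) x y m, b (r *: x + y) m = r *: b x m + b y m) /\
  (forall (r : R) x m n, b x (r *: m + n) = r *: b x m + b x n).

(* The element sum_i x_i (x) m_i of X (x)_R M is zero, i.e. (universal
   property of the tensor product) it is killed by every bilinear map. *)
Definition tensor_zero (X M : lmodType R) (l : seq (X * M)) : Prop :=
  forall (N : lmodType R) (b : X -> M -> N), bilinear_map b ->
    \sum_(p <- l) b p.1 p.2 = 0.

(* f : A -> B is a pure monomorphism, i.e. 0 -> A -> B -> B/f(A) -> 0 is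
   pure exact: f is injective and f (x) M : A (x) M -> B (x) M is injective
   for every module M. *)
Definition pure_mono (A B : lmodType R) (f : {linear A -> B}) : Prop :=
  injective f /\
  forall (M : lmodType R) (l : seq (A * M)),
    tensor_zero (map (fun p => (f p.1, p.2)) l) -> tensor_zero l.

Definition pure_injective (E : lmodType R) : Prop :=
  forall (A B : lmodType R) (f : {linear A -> B}), pure_mono f ->
    forall h : {linear A -> E},
      exists h' : {linear B -> E}, forall a, h' (f a) = h a.

End ModuleDefs.

(* Main.v *)
From HB Require Import structures.
From mathcomp Require Import all_boot all_order all_algebra.
From mathcomp Require Import ring_quotient generic_quotient.
From mathcomp Require Import boolp classical_sets functions.
Set Implicit Arguments. Unset Strict Implicit. Unset Printing Implicit Defensive.
Import GRing.Theory.
Local Open Scope ring_scope.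
Local Open Scope quotient_scope.

From Stdlib Require Classical.
Require Import Defs.
Section QL.
Variables (R : pzRingType) (V : lmodType R) (S : {pred V}).
Hypothesis Sz : zmod_closed S.
Hypothesis Ss : forall r v, v \in S -> r *: v \in S.
Definition SS : {pred V} := S.
HB.instance Definition _ := GRing.isZmodClosed.Build V SS Sz.
Definition QQ : Type := let _ := Ss in {ideal_quot SS}.
HB.instance Definition _ := GRing.Zmodule.on QQ.
HB.instance Definition _ : EqQuotient V (Quotient.equiv SS) QQ := EqQuotient.on QQ.
HB.instance Definition _ := ZmodQuotient.on QQ.
Definition scq (r : R) (q : QQ) : QQ := \pi_QQ (r *: repr q).
Lemma eqQ (u v : V) : (\pi_QQ u = \pi_QQ v) <-> (u - v \in S).
Proof.
split.
  by move=> h; rewrite (Quotient.idealrBE SS) h.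
by move=> h; apply/eqP; rewrite -(Quotient.idealrBE SS).
Qed.
Lemma piZ r u : scq r (\pi_QQ u) = \pi_QQ (r *: u).
Proof. rewrite /scq. apply/eqQ. rewrite -scalerBr. apply: Ss. apply/eqQ. by rewrite reprK. Qed.
Lemma piD u v : \pi_QQ (u + v) = \pi_QQ u + \pi_QQ v.
Proof. exact: raddfD. Qed.
Lemma piS (q : QQ) : exists u, q = \pi_QQ u.
Proof. by exists (repr q); rewrite reprK. Qed.
Lemma scqA a b q : scq a (scq b q) = scq (a * b) q.
Proof. by have [u ->] := piS q; rewrite !piZ scalerA. Qed.
Lemma scq1 : left_id 1 scq.
Proof. by move=> q; have [u ->] := piS q; rewrite piZ scale1r. Qed.
Lemma scqDr : right_distributive scq +%R.
Proof. by move=> a q1 q2; have [u ->] := piS q1; have [v ->] := piS q2; rewrite -piD !piZ scalerDr piD. Qed.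
Lemma scqDl v : {morph scq^~ v : a b / a + b}.
Proof. by move=> a b; have [u ->] := piS v; rewrite !piZ scalerDl piD. Qed.
HB.instance Definition _ := GRing.Zmodule_isLmodule.Build R QQ scqA scq1 scqDr scqDl.
Lemma piZ' r u : r *: (\pi_QQ u : QQ) = \pi_QQ (r *: u).
Proof. exact: piZ. Qed.
End QL.

Section Main.
Variable R : comPzRingType.
Variable P : R -> Prop.
Hypothesis hP : prime_ideal P.
Variable s : R.
Hypothesis hsP : ~ P s.
Hypothesis hsJ : forall r, ~ P (s * r - 1).

Lemma P0 : P 0. Proof. by case: hP => [[]]. Qed.
Lemma PD x y : P x -> P y -> P (x + y). Proof. by case: hP => [[_ []]]; auto. Qed.
Lemma PM r x : P x -> P (r * x). Proof. by case: hP => [[_ []]]; auto. Qed.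
Lemma PN x : P x -> P (- x). Proof. by move=> /(PM (-1)); rewrite mulN1r. Qed.
Lemma PB x y : P x -> P y -> P (x - y). Proof. by move=> hx /PN; apply: PD. Qed.
Lemma Pnot1 : ~ P 1. Proof. by case: hP => _ []. Qed.
Lemma Pprime x y : P (x * y) -> P x \/ P y. Proof. by case: hP => _ [] _; apply. Qed.

Lemma R1nz : (1 : R) != 0.
Proof. by apply/eqP => h; apply: Pnot1; rewrite h; exact: P0. Qed.

Definition R1 : Type := R.
HB.instance Definition _ := GRing.ComPzRing.on R1.
HB.instance Definition _ := GRing.PzSemiRing_isNonZero.Build R1 R1nz.

Definition V1 : Type := {poly R1}.
HB.instance Definition _ := GRing.Zmodule.on V1.
Definition sc1 (r : R) (p : V1) : V1 := (r : R1) *: (p : {poly R1}).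
Lemma sc1A a b p : sc1 a (sc1 b p) = sc1 (a * b) p. Proof. exact: (@scalerA R1). Qed.
Lemma sc11 : left_id 1 sc1. Proof. move=> p; exact: (@scale1r R1). Qed.
Lemma sc1Dr : right_distributive sc1 +%R. Proof. move=> a p q; exact: (@scalerDr R1). Qed.
Lemma sc1Dl v : {morph sc1^~ v : a b / a + b}. Proof. move=> a b; exact: (@scalerDl R1). Qed.
HB.instance Definition _ := GRing.Zmodule_isLmodule.Build R V1 sc1A sc11 sc1Dr sc1Dl.

Lemma coef1D (p q : V1) i : (p + q : V1)`_i = p`_i + q`_i :> R.
Proof. exact: (@coefD R1). Qed.
Lemma coef1B (p q : V1) i : (p - q : V1)`_i = p`_i - q`_i :> R.
Proof. exact: (@coefB R1). Qed.
Lemma coef1Z r (p : V1) i : (r *: p : V1)`_i = r * p`_i :> R.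
Proof. exact: (@coefZ R1). Qed.
Lemma coef10 i : (0 : V1)`_i = 0 :> R.
Proof. exact: (@coef0 R1). Qed.

Definition SM : {pred V1} := fun p => `[< forall i, P p`_i >].
Lemma SMz : zmod_closed SM.
Proof.
split; first by apply/asboolP => i; rewrite coef10; exact: P0.
move=> u v /asboolP hu /asboolP hv; apply/asboolP => i; rewrite coef1B; exact: PB.
Qed.
Lemma SMs r v : v \in SM -> r *: v \in SM.
Proof. move=> /asboolP hv; apply/asboolP => i; rewrite coef1Z; exact: PM. Qed.

Definition M := QQ SMz SMs.

Definition V2 : lmodType R := nat -> R^o.
Definition SB : {pred V2} := fun f => `[< forall i, P (f i) >].
Lemma SBz : zmod_closed SB.
Proof.
split; first by apply/asboolP => i; exact: P0.
move=> u v /asboolP hu /asboolP hv; apply/asboolP => i; exact: PB.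
Qed.
Lemma SBs r v : v \in SB -> r *: v \in SB.
Proof. move=> /asboolP hv; apply/asboolP => i; exact: PM. Qed.
Definition B := QQ SBz SBs.

Lemma piSM (q : M) : exists u, q = \pi_M u. Proof. exact: piS. Qed.
Lemma piZM r u : r *: (\pi_M u : M) = \pi_M (r *: u). Proof. exact: piZ'. Qed.
Lemma piDM u v : \pi_M (u + v) = \pi_M u + \pi_M v. Proof. exact: piD. Qed.
Lemma eqQM u v : (\pi_M u = \pi_M v) <-> (u - v \in SM). Proof. exact: eqQ. Qed.
Lemma piSB (q : B) : exists u, q = \pi_B u. Proof. exact: piS. Qed.
Definition seqof (p : V1) : V2 := fun n => p`_n.
Definition fM (q : M) : B := \pi_B (seqof (repr q)).
Lemma fM_pi p : fM (\pi_M p) = \pi_B (seqof p).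
Proof.
rewrite /fM; apply/eqQ.
have /eqQ := reprK (\pi_M p) => /asboolP h.
by apply/asboolP => i; move: (h i); rewrite coef1B.
Qed.
Lemma seqofD p q : seqof (p + q) = seqof p + seqof q.
Proof. by apply: funext => n; rewrite /seqof /= coef1D. Qed.
Lemma seqofZ r p : seqof (r *: p) = r *: seqof p.
Proof. by apply: funext => n; rewrite /seqof /= coef1Z. Qed.

Lemma fM_lin : linear fM.
Proof.
move=> a x y; have [u ->] := piS x; have [v ->] := piS y.
by rewrite piZ' -piD !fM_pi seqofD seqofZ piD piZ'.
Qed.
HB.instance Definition _ := GRing.isLinear.Build R M B *:%R fM fM_lin.

Lemma fM_inj : injective fM.
Proof.
move=> x y; have [u ->] := piSM x; have [v ->] := piSM y.
rewrite !fM_pi => /eqQ /asboolP h; apply/eqQ; apply/asboolP => i.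
by rewrite coef1B; exact: h.
Qed.

Definition gN (n : nat) (y : B) : M := \pi_M (\poly_(i < n) (repr y i : R1) : V1).
Lemma gN_pi n w : gN n (\pi_B w) = \pi_M (\poly_(i < n) (w i : R1) : V1).
Proof.
rewrite /gN; apply/eqQ; apply/asboolP => i.
have /eqQ /asboolP h := reprK (\pi_B w).
rewrite coef1B /= !coef_poly; case: ifP => _; last by rewrite subrr; exact: P0.
exact: h.
Qed.
Lemma gN_lin n a x y : gN n (a *: x + y) = a *: gN n x + gN n y.
Proof.
have [w1 ->] := piSB x; have [w2 ->] := piSB y.
rewrite piZ' -piD !gN_pi piZ' -piD; congr (\pi_M _).
apply/polyP => i; rewrite coef1D coef1Z !coef_poly /=.
by case: ifP => _ //; rewrite mulr0 addr0.
Qed.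

Lemma gN_fM n (p : V1) : (size p <= n)%N -> gN n (fM (\pi_M p)) = \pi_M p.
Proof.
move=> hs; rewrite fM_pi gN_pi; congr (\pi_M _).
apply/polyP => i; rewrite coef_poly; case: ifP => // /negbT; rewrite -leqNgt => hi.
by rewrite nth_default //; exact: leq_trans hi.
Qed.

Lemma pure_fM : pure_mono fM.
Proof.
split; first exact: fM_inj.
move=> X l H N b [hb1 hb2].
set n := (\max_(p <- l) size (repr p.1))%N.
have hb' : bilinear_map (fun y m => b (gN n y) m).
  split => [r x y m|r x m m']; last exact: hb2.
  by rewrite gN_lin hb1.
rewrite -[RHS](H N _ hb') big_map; apply: eq_big_seq => p hp /=.
have e : p.1 = \pi_M (repr p.1) by rewrite reprK.
rewrite {2}e gN_fM -?e //.
rewrite /n. by apply: leq_bigmax_seq.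
Qed.

Definition idM (x : M) : M := x.
Lemma idM_lin : linear idM. Proof. by []. Qed.
HB.instance Definition _ := GRing.isLinear.Build R M M *:%R idM idM_lin.

Lemma Pexp n : ~ P (s ^+ n).
Proof.
elim: n => [|n IH]; first by rewrite expr0; exact: Pnot1.
by rewrite exprS => /Pprime [].
Qed.

Lemma not_pi : ~ pure_injective M.
Proof.
move=> H; have [h' hh'] := H M B fM pure_fM idM.
set x := \pi_B ((fun k => s ^+ k) : V2).
have dec n : x = fM (\pi_M (\poly_(i < n) (s ^+ i : R1) : V1)) +
    s ^+ n *: \pi_B ((fun k => if (k < n)%N then 0 else s ^+ (k - n)) : V2).
  rewrite fM_pi piZ' -piD; congr (\pi_B _); apply: funext => k /=.
    have -> : forall (f g : V2) (r : R) k, (f + r *: g) k = f k + r * g k by [].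
  rewrite /seqof coef_poly; case: ifP => hk.
    by rewrite mulr0 addr0.
  by rewrite add0r -exprD subnKC // leqNgt hk.
set N := size (repr (h' x)).
have e := congr1 h' (dec N.+1).
rewrite linearD linearZ_LR hh' /idM /= in e.
have [c ey] := piSM (h' (\pi_B ((fun k => if (k < N.+1)%N then 0 else s ^+ (k - N.+1)) : V2))).
rewrite ey piZM -piDM in e.
have ex : h' x = \pi_M (repr (h' x)) by rewrite reprK.
rewrite ex in e; move/eqQM/asboolP: e => /(_ N).
rewrite coef1B coef1D coef1Z coef_poly ltnSn nth_default //.
move=> /PN; rewrite sub0r opprK exprSr -mulrA -{1}(mulr1 (s ^+ N)) -mulrDr.
move=> /Pprime [/Pexp //|/PN h]; apply: (@hsJ (- c`_N)).
by rewrite mulrN -opprD addrC.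
Qed.
Lemma piM0 : (0 : M) = \pi_M 0. Proof. by rewrite raddf0. Qed.

Lemma annM_P r (m : M) : P r -> r *: m = 0.
Proof.
move=> hr; have [u ->] := piSM m; rewrite piZM piM0; apply/eqQM/asboolP => i.
by rewrite coef1B coef10 subr0 coef1Z mulrC; exact: PM.
Qed.

Lemma annM_nP r (m : M) : ~ P r -> r *: m = 0 -> m = 0.
Proof.
move=> hr; have [u ->] := piSM m; rewrite piZM piM0 => /eqQM /asboolP h.
apply/eqQM/asboolP => i; move: (h i); rewrite !coef1B !coef10 !subr0 coef1Z.
by case/Pprime.
Qed.

Lemma semi_M : semi_compact M.
Proof.
move=> L xs I hI fin.
case: (Classical_Prop.classic (exists a0 r, I a0 r /\ ~ P r)) => [[a0 [r0 [ha0 hr0]]] | hno].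
  exists (xs a0) => a r har.
  case: (Classical_Prop.classic (P r)) => hr; first exact: annM_P.
  have [x2 hx2] := fin 2 (fun i : 'I_2 => if val i == 0%N then a0 else a).
  move: (hx2 ord0) (hx2 (Ordinal (isT : (1 < 2)%N))) => /= e0 e1.
  have x0 : x2 = xs a0.
    by apply/eqP; rewrite -subr_eq0; apply/eqP; apply: (annM_nP hr0); apply: e0.
  have x1 : x2 = xs a.
    by apply/eqP; rewrite -subr_eq0; apply/eqP; apply: (annM_nP hr); apply: e1.
  by rewrite -x0 x1 subrr scaler0.
exists 0 => a r har; apply: annM_P.
by apply: Classical_Prop.NNPP => hr; apply: hno; exists a, r.
Qed.
End Main.

Lemma nonmax (R : comPzRingType) (P : R -> Prop) :
  prime_ideal P -> ~ maximal_ideal P ->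
  exists s, ~ P s /\ forall r, ~ P (s * r - 1).
Proof.
move=> hP hn; apply: Classical_Prop.NNPP => hno; apply: hn.
have [hPi [hP1 _]] := hP.
split=> //; split=> // J [J0 [JD JM]] hPJ.
case: (Classical_Prop.classic (forall x, J x -> P x)) => [h|h]; [by right | left].
have [s0 [hJs hPs]] : exists s0, J s0 /\ ~ P s0.
  apply: Classical_Prop.NNPP => hc; apply: h => y hy; apply: Classical_Prop.NNPP => hpy; apply: hc; by exists y.
have [r hr] : exists r, P (s0 * r - 1).
  apply: Classical_Prop.NNPP => hc; apply: hno; exists s0; split=> // r hr; apply: hc; by exists r.
have J1 : J 1.
  have -> : (1 : R) = s0 * r + (-1) * (s0 * r - 1).
    by rewrite mulN1r opprB addrC subrK.
  apply: JD; first by rewrite mulrC; apply: JM.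
  by apply: JM; apply: hPJ.
by move=> z; rewrite -(mulr1 z); apply: JM.
Qed.

Theorem proposition3p2 (R : comPzRingType) :
  (forall M : lmodType R, semi_compact M -> pure_injective M) ->
  forall P : R -> Prop, prime_ideal P -> maximal_ideal P.
Proof.
move=> H P hP; apply: Classical_Prop.NNPP => hn.
have [s [hsP hsJ]] := nonmax hP hn.
exact: (@not_pi R P hP s hsP hsJ (H _ (@semi_M R P hP))).
Qed.
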